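(* Let $G$ and $H$ be finite simple graphs and $k$ an integer. Then $$\gamma^d_k(G\,\square\, H)\leq \min\{\gamma^d_k(G)\,n(H),\ \gamma^d_k(H)\,n(G)\}.$$
   Context: All graphs are finite and simple; $n(G)=|V_G|$. For $S\subseteq V_G$ and $v\in V_G$, $N_S(v)=\{u\in S: uv\in E_G\}$ and $\bar S=V_G\setminus S$. For an integer $k$, a nonempty $S\subseteq V_G$ is a global defensive $k$-alliance in $G$ if every vertex outside $S$ has a neighbor in $S$ and $|N_S(v)|\ge |N_{\bar S}(v)|+k$ for every $v\in S$; $\gamma^d_k(G)$ is the minimum size of such a set ($\infty$ if none exists, with $\infty\cdot n=\infty$). The Cartesian product $G\,\square\,H$ has vertex set $V_G\times V_H$, with $(g,h)\sim(g',h')$ iff either $g=g'$ and $hh'\in E_H$, or $gg'\in E_G$ and $h=h'$. *)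

(* Defs.v *)
From HB Require Import structures.
From mathcomp Require Import all_boot all_order all_algebra.
Set Implicit Arguments. Unset Strict Implicit. Unset Printing Implicit Defensive.

Definition simple_graph (T : finType) (e : rel T) : Prop :=
  symmetric e /\ irreflexive e.

Definition nbhd (T : finType) (e : rel T) (S : {set T}) (v : T) : {set T} :=
  [set u in S | e v u].

Definition gda (T : finType) (e : rel T) (k : int) (S : {set T}) : bool :=
  [&& S != set0,
      [forall v in ~: S, exists u in S, e v u] &
      [forall v in S, (#|nbhd e (~: S) v|%:Z + k <= #|nbhd e S v|%:Z)%R]].

(* gamma^d_k(G) : None encodes infinity (no alliance exists). *)
Definition gamma_dk (T : finType) (e : rel T) (k : int) : option nat :=
  if [exists S, gda e k S]
  then Some (\big[minn/#|T|]_(S : {set T} | gda e k S) #|S|)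
  else None.

Definition ole (a b : option nat) : bool :=
  match b, a with
  | None, _ => true
  | Some y, Some x => x <= y
  | Some _, None => false
  end.
Definition omul (a : option nat) (n : nat) : option nat :=
  match a with Some x => Some (x * n) | None => None end.
Definition omin (a b : option nat) : option nat :=
  match a, b with
  | Some x, Some y => Some (minn x y)
  | Some x, None => Some x
  | None, b => b
  end.

Definition cart_rel (T1 T2 : finType) (e1 : rel T1) (e2 : rel T2) : rel (T1 * T2) :=
  fun x y => ((x.1 == y.1) && e2 x.2 y.2) || (e1 x.1 y.1 && (x.2 == y.2)).

(* Main.v *)
Require Import Defs.
From mathcomp Require Import all_boot all_order all_algebra.
From mathcomp Require Import zify.

Lemma bigmin_le_seq (I : eqType) (r : seq I) (P : pred I) (F : I -> nat) x0 j :
  j \in r -> P j -> \big[minn/x0]_(i <- r | P i) F i <= F j.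
Proof.
elim: r => // a r IH; rewrite inE big_cons => /orP [/eqP <-|Hj] Pj.
- by rewrite Pj geq_minl.
- case: (P a); last exact: IH.
  by rewrite (leq_trans (geq_minr _ _)) // IH.
Qed.

Lemma gamma_up (T : finType) (e : rel T) (k : int) (S : {set T}) :
  gda e k S -> exists y, gamma_dk e k = Some y /\ y <= #|S|.
Proof.
move=> HS; rewrite /gamma_dk.
have -> : [exists S, gda e k S] by apply/existsP; exists S.
eexists; split; first reflexivity.
by apply: bigmin_le_seq => //; rewrite mem_index_enum.
Qed.

Lemma gamma_some (T : finType) (e : rel T) (k : int) x :
  gamma_dk e k = Some x -> exists S, gda e k S /\ #|S| <= x.
Proof.
rewrite /gamma_dk; case: ifP => // /existsP [S0 H0] [<-].
apply: (big_ind (fun v => exists S, gda e k S /\ #|S| <= v)).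
- by exists S0; split => //; apply: max_card.
- move=> a b [Sa [Ha Ha']] [Sb [Hb Hb']].
  case: (leqP a b) => hab.
  + by exists Sa; split => //; rewrite (minn_idPl hab).
  + by exists Sb; split => //; rewrite (minn_idPr (ltnW hab)).
- by move=> S HS; exists S.
Qed.

Lemma int_step {a b a' b' : nat} {k : int} :
  (a%:Z + k <= b%:Z)%R -> a' <= a -> b <= b' -> (a'%:Z + k <= b'%:Z)%R.
Proof. move=> h3 h1 h2; lia. Qed.

Lemma prodL (T1 T2 : finType) (e1 : rel T1) (e2 : rel T2) (k : int) (S : {set T1}) :
  0 < #|T2| -> gda e1 k S -> gda (cart_rel e1 e2) k (setX S [set: T2]).
Proof.
move=> hT2 /and3P [Sne /forall_inP Hdom /forall_inP Hal].
apply/and3P; split.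
- case/set0Pn: Sne => g Hg.
  have [h _] : exists h : T2, true.
    by case/card_gt0P: hT2 => h _; exists h.
  by apply/set0Pn; exists (g, h); rewrite in_setX Hg in_setT.
- apply/forall_inP => [[g h]]; rewrite in_setC in_setX in_setT andbT => Hg.
  have /exists_inP [u Hu Hgu] : [exists u in S, e1 g u] by apply: Hdom; rewrite in_setC.
  apply/exists_inP; exists (u, h); first by rewrite in_setX Hu in_setT.
  by rewrite /cart_rel /= Hgu eqxx orbT.
- apply/forall_inP => [[g h]]; rewrite in_setX in_setT andbT => Hg.
  apply: (int_step (Hal g Hg)).
  + rewrite -(card_imset (nbhd e1 (~: S) g) (fun u v (E : (u, h) = (v, h)) => congr1 fst E)).
    apply: subset_leq_card; apply/subsetP => -[g' h'] /=.
    rewrite !inE /cart_rel /= => /andP [Hout /orP [/andP [/eqP Eg _]|/andP [Ee /eqP Eh]]].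
    * by subst g'; rewrite Hg in Hout.
    * apply/imsetP; exists g'; last by rewrite Eh.
      by rewrite !inE Ee andbT; move: Hout; rewrite andbT.
  + rewrite -(card_imset (nbhd e1 S g) (fun u v (E : (u, h) = (v, h)) => congr1 fst E)).
    apply: subset_leq_card; apply/subsetP => -[g' h'] /imsetP [u].
    rewrite !inE => /andP [Hu Hgu] [-> ->].
    by rewrite Hu /cart_rel /= Hgu eqxx orbT.
Qed.

Lemma prodR (T1 T2 : finType) (e1 : rel T1) (e2 : rel T2) (k : int) (S : {set T2}) :
  0 < #|T1| -> gda e2 k S -> gda (cart_rel e1 e2) k (setX [set: T1] S).
Proof.
move=> hT1 /and3P [Sne /forall_inP Hdom /forall_inP Hal].
apply/and3P; split.
- case/set0Pn: Sne => h Hh.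
  have [g _] : exists g : T1, true.
    by case/card_gt0P: hT1 => g _; exists g.
  by apply/set0Pn; exists (g, h); rewrite in_setX Hh in_setT.
- apply/forall_inP => [[g h]]; rewrite in_setC in_setX in_setT /= => Hh.
  have /exists_inP [u Hu Hhu] : [exists u in S, e2 h u] by apply: Hdom; rewrite in_setC.
  apply/exists_inP; exists (g, u); first by rewrite in_setX Hu in_setT.
  by rewrite /cart_rel /= Hhu eqxx.
- apply/forall_inP => [[g h]]; rewrite in_setX in_setT /= => Hh.
  apply: (int_step (Hal h Hh)).
  + rewrite -(card_imset (nbhd e2 (~: S) h) (fun u v (E : (g, u) = (g, v)) => congr1 snd E)).
    apply: subset_leq_card; apply/subsetP => -[g' h'] /=.
    rewrite !inE /cart_rel /= => /andP [Hout /orP [/andP [/eqP Eg Ee]|/andP [_ /eqP Eh]]].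
    * apply/imsetP; exists h'; last by rewrite Eg.
      by rewrite !inE Ee andbT; move: Hout.
    * by subst h'; rewrite Hh in Hout.
  + rewrite -(card_imset (nbhd e2 S h) (fun u v (E : (g, u) = (g, v)) => congr1 snd E)).
    apply: subset_leq_card; apply/subsetP => -[g' h'] /imsetP [u].
    rewrite !inE => /andP [Hu Hhu] [-> ->].
    by rewrite Hu /cart_rel /= Hhu eqxx.
Qed.

Theorem mainTheorem2 (T1 T2 : finType) (e1 : rel T1) (e2 : rel T2) (k : int)
  (hG : simple_graph e1) (hH : simple_graph e2)
  (hT1 : 0 < #|T1|) (hT2 : 0 < #|T2|) :
  ole (gamma_dk (cart_rel e1 e2) k)
      (omin (omul (gamma_dk e1 k) #|T2|) (omul (gamma_dk e2 k) #|T1|)).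
Proof.
have L : forall x, gamma_dk e1 k = Some x -> ole (gamma_dk (cart_rel e1 e2) k) (Some (x * #|T2|)).
  move=> x /gamma_some [S [HS HSx]].
  have [y [-> Hy]] := @gamma_up _ _ _ _ (@prodL _ _ e1 e2 k S hT2 HS).
  rewrite /= (leq_trans Hy) // cardsX cardsT leq_mul2r HSx orbT //.
have R : forall x, gamma_dk e2 k = Some x -> ole (gamma_dk (cart_rel e1 e2) k) (Some (x * #|T1|)).
  move=> x /gamma_some [S [HS HSx]].
  have [y [-> Hy]] := @gamma_up _ _ _ _ (@prodR _ _ e1 e2 k S hT1 HS).
  rewrite /= (leq_trans Hy) // cardsX cardsT mulnC leq_mul2r HSx orbT //.
case E1: (gamma_dk e1 k) => [x|]; case E2: (gamma_dk e2 k) => [z|].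
- move: (L x E1) (R z E2); rewrite /omin /omul.
  case: (gamma_dk (cart_rel e1 e2) k) => //= y h1 h2.
  by rewrite leq_min h1 h2.
- exact: L.
- exact: R.
- by rewrite /ole /omin /omul; case: (gamma_dk (cart_rel e1 e2) k).
Qed.
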